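(* Let $e\ge1$ and let $Q$ be a generic binary quadratic form. Then for every integer $p$ with $0\le p\le e$, the transvectant $(Q^e,Q^e)_{2p}$ is not identically zero.
   Context: For binary forms $A,B$ in $(x_0,x_1)$ of degrees $a,b$ and $k\ge0$, $(A,B)_k=\frac{(a-k)!(b-k)!}{a!\,b!}\bigl[\Omega^kA(x_0,x_1)B(y_0,y_1)\bigr]_{\underline{y}:=\underline{x}}$, where $\Omega=\frac{\partial^2}{\partial x_0\partial y_1}-\frac{\partial^2}{\partial x_1\partial y_0}$. *)

(* Defs.v *)
From HB Require Import structures.
From mathcomp Require Import all_boot all_order all_algebra.
From mathcomp Require Import mpoly.
Set Implicit Arguments. Unset Strict Implicit. Unset Printing Implicit Defensive.
Import GRing.Theory.
Local Open Scope ring_scope.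

(* Binary forms in (x0,x1) with coefficients in a commutative R-algebra K
   (R a field) are elements of {mpoly K[2]}: 'X_0 = x0, 'X_1 = x1. *)

Section Transvectant.
Variables (R : fieldType) (K : comAlgType R).

Definition vx0 : 'I_4 := inord 0.
Definition vx1 : 'I_4 := inord 1.
Definition vy0 : 'I_4 := inord 2.
Definition vy1 : 'I_4 := inord 3.

Definition in_x (A : {mpoly K[2]}) : {mpoly K[4]} :=
  A \mPo [tuple 'X_vx0; 'X_vx1].
Definition in_y (B : {mpoly K[2]}) : {mpoly K[4]} :=
  B \mPo [tuple 'X_vy0; 'X_vy1].
Definition diag_xy (P : {mpoly K[4]}) : {mpoly K[2]} :=
  P \mPo [tuple 'X_(inord 0); 'X_(inord 1); 'X_(inord 0); 'X_(inord 1)].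

Definition Omega (P : {mpoly K[4]}) : {mpoly K[4]} :=
  mderiv vx0 (mderiv vy1 P) - mderiv vx1 (mderiv vy0 P).

Definition transvectant (a b : nat) (A B : {mpoly K[2]}) (k : nat)
  : {mpoly K[2]} :=
  ((((a - k)`! * (b - k)`!)%:R / (a`! * b`!)%:R : R)%:A : K)
    *: diag_xy (iter k Omega (in_x A * in_y B)).

End Transvectant.

(* The generic binary quadratic form
   Q = a x0^2 + 2 b x0 x1 + c x1^2, whose coefficients a, b, c are
   indeterminates, i.e. the variables 0,1,2 of {mpoly R[3]}. *)
Definition genericQ (R : fieldType) : {mpoly {mpoly R[3]}[2]} :=
  let a : {mpoly R[3]} := 'X_(inord 0) in
  let b : {mpoly R[3]} := 'X_(inord 1) in
  let c : {mpoly R[3]} := 'X_(inord 2) in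
  let x0 : {mpoly {mpoly R[3]}[2]} := 'X_(inord 0) in
  let x1 : {mpoly {mpoly R[3]}[2]} := 'X_(inord 1) in
  a%:MP * x0 ^+ 2 + (2%:R * b)%:MP * x0 * x1 + c%:MP * x1 ^+ 2.

(* Main.v *)
Require Import Defs.
From HB Require Import structures.
From mathcomp Require Import all_boot all_order all_algebra.
From mathcomp Require Import mpoly.
From mathcomp Require Import zify.
Local Open Scope ring_scope.

Module Helpers.
Set Implicit Arguments. Unset Strict Implicit. Unset Printing Implicit Defensive.
Import GRing.Theory.

Lemma pascal_sum (K : pzRingType) (V : lmodType K) k (f : nat -> V) :
  \sum_(j < k.+1) ((-1)^+j *+ 'C(k,j)) *: f j
  - \sum_(j < k.+1) ((-1)^+j *+ 'C(k,j)) *: f j.+1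
  = \sum_(j < k.+2) ((-1)^+j *+ 'C(k.+1,j)) *: f j.
Proof.
pose g j := ((-1)^+j *+ 'C(k,j) : K) *: f j.
pose h j := if j is j'.+1 then - (((-1)^+j' *+ 'C(k,j') : K) *: f j) else 0.
rewrite (eq_bigr (fun j : 'I_k.+2 => g j + h j)); last first.
  case=> [[|j] Hj] _; rewrite /g /h /=.
    by rewrite !bin0 addr0.
  by rewrite binS mulrnDr scalerDl exprS mulN1r !mulNrn !scaleNr.
rewrite big_split /=.
have -> : \sum_(i < k.+2) g i = \sum_(i<k.+1) g i.
  by rewrite big_ord_recr /= /g bin_small // mulr0n scale0r addr0.
by rewrite [X in _ = _ + X]big_ord_recl /= /h add0r sumrN.
Qed.

Section Calc.
Variables (R : fieldType) (K : comAlgType R).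
Local Notation P4 := {mpoly K[4]}.

Definition mA : 'X_{1..4} := (U_(vy1) + U_(vx0))%MM.
Definition mB : 'X_{1..4} := (U_(vy0) + U_(vx1))%MM.

Lemma OmegaE (G : P4) : Omega G = mderivm mA G - mderivm mB G.
Proof. by rewrite /Omega /mA /mB !mderivmDm !mderivmU1m. Qed.

Definition Mj k j : 'X_{1..4} := (mA *+ (k - j) + mB *+ j)%MM.

Lemma iterOmega k (G : P4) : iter k (@Omega R K) G =
  \sum_(j < k.+1) (((-1)^+j *+ 'C(k,j)) : K) *: mderivm (Mj k j) G.
Proof.
elim: k => [|k IH].
  by rewrite big_ord_recl big_ord0 /= addr0 expr0 scale1r /Mj mulm0n add0m mderivm0m.
rewrite iterS IH OmegaE !raddf_sum /=.
pose f j := mderivm (Mj k.+1 j) G.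
rewrite -(pascal_sum k f) sumrN; congr (_ - _); apply: eq_bigr => j _;
  rewrite linearZ /= -mderivmDm /f /Mj.
  have hj : (k.+1 - j = (k - j).+1)%N by rewrite subSn // -ltnS.
  by rewrite hj mulmSr -addmA [(mB *+ j + mA)%MM]addmC addmA.
by rewrite subSS mulmSr addmA.
Qed.

End Calc.

Lemma vx0E : vx0 = @Ordinal 4 0 isT. Proof. by apply: val_inj; rewrite /= inordK. Qed.
Lemma vx1E : vx1 = @Ordinal 4 1 isT. Proof. by apply: val_inj; rewrite /= inordK. Qed.
Lemma vy0E : vy0 = @Ordinal 4 2 isT. Proof. by apply: val_inj; rewrite /= inordK. Qed.
Lemma vy1E : vy1 = @Ordinal 4 3 isT. Proof. by apply: val_inj; rewrite /= inordK. Qed.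

Definition i0 : 'I_2 := @Ordinal 2 0 isT.
Definition i1 : 'I_2 := @Ordinal 2 1 isT.

Definition ux (u : 'X_{1..2}) : 'X_{1..4} := (U_(vx0) *+ u i0 + U_(vx1) *+ u i1)%MM.
Definition vy (u : 'X_{1..2}) : 'X_{1..4} := (U_(vy0) *+ u i0 + U_(vy1) *+ u i1)%MM.
Definition px (m : 'X_{1..4}) : 'X_{1..2} := (U_(i0) *+ m vx0 + U_(i1) *+ m vx1)%MM.
Definition py (m : 'X_{1..4}) : 'X_{1..2} := (U_(i0) *+ m vy0 + U_(i1) *+ m vy1)%MM.

Lemma ord2_cases (P : 'I_2 -> Prop) : P i0 -> P i1 -> forall i, P i.
Proof.
move=> H0 H1 [[|[|i]] Hi] //.
- by have -> : Ordinal Hi = i0 by apply: val_inj.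
- by have -> : Ordinal Hi = i1 by apply: val_inj.
Qed.

Lemma ord4_cases (P : 'I_4 -> Prop) :
  P vx0 -> P vx1 -> P vy0 -> P vy1 -> forall i, P i.
Proof.
rewrite vx0E vx1E vy0E vy1E => H0 H1 H2 H3 [[|[|[|[|i]]]] Hi] //.
- by have -> : Ordinal Hi = Ordinal (isT : 0 < 4)%N by apply: val_inj.
- by have -> : Ordinal Hi = Ordinal (isT : 1 < 4)%N by apply: val_inj.
- by have -> : Ordinal Hi = Ordinal (isT : 2 < 4)%N by apply: val_inj.
- by have -> : Ordinal Hi = Ordinal (isT : 3 < 4)%N by apply: val_inj.
Qed.

Ltac mnm_simpl := rewrite ?mnmDE ?mulmnE ?mnm1E ?vx0E ?vx1E ?vy0E ?vy1E /=.

Lemma key_mnm u v m : (ux u + vy v == m)%MM = (u == px m) && (v == py m).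
Proof.
apply/eqP/andP => [<-|[/eqP-> /eqP->]].
  by split; apply/eqP/mnmP; apply: ord2_cases; rewrite /px /ux /vy; mnm_simpl;
    rewrite ?mul1n ?mul0n ?muln1 ?muln0 ?addn0 ?add0n.
by apply/mnmP; apply: ord4_cases; rewrite /px /py /ux /vy; mnm_simpl;
    rewrite ?mul1n ?mul0n ?muln1 ?muln0 ?addn0 ?add0n.
Qed.

Section Calc2.
Variables (R : fieldType) (K : comAlgType R).

Lemma in_xX (u : 'X_{1..2}) : in_x 'X_[u] = 'X_[ux u] :> {mpoly K[4]}.
Proof.
rewrite /in_x comp_mpolyX !big_ord_recl big_ord0 mulr1 /ux mpolyXD -!mpolyXn.
have -> : lift ord0 ord0 = i1 :> 'I_2 by apply: val_inj.
have -> : ord0 = i0 :> 'I_2 by apply: val_inj.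
by [].
Qed.

Lemma in_yX (u : 'X_{1..2}) : in_y 'X_[u] = 'X_[vy u] :> {mpoly K[4]}.
Proof.
rewrite /in_y comp_mpolyX !big_ord_recl big_ord0 mulr1 /vy mpolyXD -!mpolyXn.
have -> : lift ord0 ord0 = i1 :> 'I_2 by apply: val_inj.
have -> : ord0 = i0 :> 'I_2 by apply: val_inj.
by [].
Qed.

Lemma coef_xy (A B : {mpoly K[2]}) m :
  (in_x A * in_y B)@_m = A@_(px m) * B@_(py m).
Proof.
rewrite [A]mpolyE [B]mpolyE /in_x /in_y !raddf_sum /= mulr_suml.
rewrite !raddf_sum /= mulr_suml; apply: eq_bigr => u _.
rewrite mulr_sumr raddf_sum /= mulr_sumr; apply: eq_bigr => v _.
rewrite !comp_mpolyZ -/(in_x _) -/(in_y _) in_xX in_yX.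
rewrite -scalerAl -scalerAr !mcoeffZ -mpolyXD !mcoeffX key_mnm.
by case: (u == px m); case: (v == py m); rewrite /= ?mulr1 ?mulr0 ?mul0r ?mulr1.
Qed.

Lemma coef_iterOmega k (G : {mpoly K[4]}) m : (iter k (@Omega R K) G)@_m =
  \sum_(j < k.+1) (((-1)^+j *+ 'C(k,j)) : K) *
     (G@_(Mj k j + m) *+ \prod_(i < 4) ((Mj k j + m)%MM i)^_((Mj k j) i)).
Proof.
rewrite iterOmega raddf_sum; apply: eq_bigr => j _.
by rewrite /= mcoeffZ mcoeff_mderivm.
Qed.

End Calc2.


Definition vv (R : fieldType) (i : 'I_3) : R := if (val i == 1)%N then 0 else 1.

Section Spec.
Variable R : fieldType.

Lemma mapQ : map_mpoly (meval (@vv R)) (genericQ R) = 'X_i0 ^+ 2 + 'X_i1 ^+ 2.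
Proof.
have h0 : (inord 0 : 'I_2) = i0 by apply: val_inj; rewrite /= inordK.
have h1 : (inord 1 : 'I_2) = i1 by apply: val_inj; rewrite /= inordK.
rewrite /genericQ !rmorphD !rmorphM /= !map_mpolyC !map_mpolyX.
have e2 : meval (@vv R) (2 : {mpoly R[3]}) = 2 by rewrite (rmorph_nat (meval (@vv R))).
have v0 : @vv R (inord 0) = 1.
  by rewrite /vv; have -> : val (inord 0 : 'I_3) = 0%N by exact: inordK.
have v1 : @vv R (inord 1) = 0.
  by rewrite /vv; have -> : val (inord 1 : 'I_3) = 1%N by exact: inordK.
have v2 : @vv R (inord 2) = 1.
  by rewrite /vv; have -> : val (inord 2 : 'I_3) = 2%N by exact: inordK.
rewrite /= e2 !mevalXU v0 v1 v2 h0 h1 mpolyC0 mpolyC1 !mul1r mulr0 !mul0r addr0.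
by rewrite -!expr2.
Qed.

Lemma coefP e m : (('X_i0 ^+ 2 + 'X_i1 ^+ 2) ^+ e : {mpoly R[2]})@_m =
  if ((m i0 + m i1 == e.*2)%N && ~~ odd (m i1)) then ('C(e, (m i1)./2))%:R else 0.
Proof.
rewrite exprDn raddf_sum /=.
under eq_bigr => i _ do rewrite !mpolyXn -mpolyXD mcoeffMn mcoeffX.
have key (i : nat) : ((U_(i0) *+ 2 *+ (e - i) + U_(i1) *+ 2 *+ i)%MM == m)
    = (m i0 == (e - i).*2)%N && (m i1 == i.*2)%N.
  apply/eqP/andP => [<-|[/eqP h0 /eqP h1]].
    rewrite !mnmDE !mulmnE !mnm1E /=; split; lia.
  apply/mnmP; apply: ord2_cases; rewrite !mnmDE !mulmnE !mnm1E /= ?h0 ?h1; lia.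
under eq_bigr => i _ do rewrite key.
have hs := odd_double_half (m i1).
case: ifP => [/andP [/eqP hsum hodd]|hc].
  have hle : ((m i1)./2 < e.+1)%N.
    rewrite (negbTE hodd) in hs; lia.
  rewrite (negbTE hodd) add0n in hs.
  rewrite (bigD1 (Ordinal hle)) //= big1 ?addr0.
    have -> : (m i0 == (e - (m i1)./2).*2)%N && (m i1 == ((m i1)./2).*2)%N.
      apply/andP; split; apply/eqP; lia.
    by rewrite mulr1n.
  move=> i /negP hne; case: andP => [[/eqP a /eqP b]|]; last by rewrite mul0rn.
  exfalso; apply: hne; apply/eqP/val_inj => /=; lia.
rewrite big1 // => i _; case: andP => [[/eqP a /eqP b]|]; last by rewrite mul0rn.
move: hc; rewrite b odd_double andbT => /negP; case; apply/eqP.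
have := ltn_ord i; lia.
Qed.
End Spec.


Ltac mnm_simpl2 := rewrite ?vx0E ?vx1E ?vy0E ?vy1E; do 4 (rewrite ?mnmDE ?mulmnE ?mnm1E /=).

Section Main.
Variable R : fieldType.
Hypothesis charR0 : [pchar R] =i pred0.
Local Notation K := {mpoly R[3]}.

Lemma natr_neq0 n : (0 < n)%N -> (n%:R : R) != 0.
Proof. by move=> hn; rewrite ((pcharf0P R).1 charR0) -lt0n. Qed.

Definition mstar (N : nat) : 'X_{1..4} := (U_(vx0) *+ N + U_(vy0) *+ N)%MM.

Lemma ff_gt0 (M m : 'X_{1..4}) : (0 < \prod_(i < 4) ((M + m)%MM i)^_(M i))%N.
Proof. by apply: prodn_gt0 => i; rewrite ffact_gt0 mnmDE leq_addr. Qed.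

Lemma phi_coefP e u : meval (@vv R) ((genericQ R ^+ e)@_u) =
  if ((u i0 + u i1 == e.*2)%N && ~~ odd (u i1)) then ('C(e, (u i1)./2))%:R else 0.
Proof. by rewrite -mcoeff_map_mpoly rmorphXn /= mapQ coefP. Qed.

Lemma phi_coefG e k (m : 'X_{1..4}) : (k <= e.*2)%N ->
  m vx1 = 0%N -> m vy1 = 0%N ->
  meval (@vv R) ((iter k (@Omega R K) (in_x (genericQ R ^+ e) * in_y (genericQ R ^+ e)))@_m)
  = \sum_(j < k.+1) ((-1)^+j *+ 'C(k,j)) *
     (((if ((m vx0 + k == e.*2)%N && ~~ odd j) then ('C(e, j./2))%:R else 0) *
       (if ((m vy0 + k == e.*2)%N && ~~ odd (k - j)) then ('C(e, (k - j)./2))%:R else 0))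
      *+ \prod_(i < 4) ((Mj k j + m)%MM i)^_((Mj k j) i)).
Proof.
move=> hk h1 h3.
rewrite coef_iterOmega rmorph_sum; apply: eq_bigr => j _.
rewrite rmorphM rmorphMn rmorphXn rmorphN rmorph1 rmorphMn coef_xy rmorphM /= !phi_coefP.
have hj := ltn_ord j.
have e1 : (px (Mj k j + m)) i0 = (k - j + m vx0)%N.
  by rewrite /px /Mj /mA /mB; mnm_simpl2; rewrite ?mul1n ?mul0n ?add0n ?muln1 ?muln0 ?addn0.
have e2 : (px (Mj k j + m)) i1 = (j + m vx1)%N.
  by rewrite /px /Mj /mA /mB; mnm_simpl2; rewrite ?mul1n ?mul0n ?add0n ?muln1 ?muln0 ?addn0.
have e3 : (py (Mj k j + m)) i0 = (j + m vy0)%N.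
  by rewrite /py /Mj /mA /mB; mnm_simpl2; rewrite ?mul1n ?mul0n ?add0n ?muln1 ?muln0 ?addn0.
have e4 : (py (Mj k j + m)) i1 = (k - j + m vy1)%N.
  by rewrite /py /Mj /mA /mB; mnm_simpl2; rewrite ?mul1n ?mul0n ?add0n ?muln1 ?muln0 ?addn0.
rewrite e1 e2 e3 e4 h1 h3 !addn0.
have -> : (k - j + m vx0 + j = m vx0 + k)%N by lia.
by have -> : (j + m vy0 + (k - j) = m vy0 + k)%N by lia.
Qed.

Lemma phi_coefG_other e k (m : 'X_{1..4}) : (k <= e.*2)%N ->
  m vx1 = 0%N -> m vy1 = 0%N ->
  ((m vx0 + k != e.*2) || (m vy0 + k != e.*2))%N ->
  meval (@vv R) ((iter k (@Omega R K) (in_x (genericQ R ^+ e) * in_y (genericQ R ^+ e)))@_m) = 0.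
Proof.
move=> hk h1 h3 hne; rewrite phi_coefG //; apply: big1 => j _.
case/orP: hne => /negbTE ->; by rewrite ?mul0r ?mulr0 ?mul0rn ?mulr0.
Qed.

Lemma phi_coefG_star e p : (p <= e)%N ->
  meval (@vv R) ((iter (2 * p) (@Omega R K)
     (in_x (genericQ R ^+ e) * in_y (genericQ R ^+ e)))@_(mstar (e.*2 - 2 * p))) != 0.
Proof.
move=> hp.
have hk : (2 * p <= e.*2)%N by lia.
have m1 : mstar (e.*2 - 2 * p) vx1 = 0%N by rewrite /mstar; mnm_simpl2.
have m3 : mstar (e.*2 - 2 * p) vy1 = 0%N by rewrite /mstar; mnm_simpl2.
have m0 : mstar (e.*2 - 2 * p) vx0 = (e.*2 - 2 * p)%N.
  by rewrite /mstar; mnm_simpl2; rewrite ?mul1n ?mul0n ?add0n ?muln1 ?muln0 ?addn0.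
have m2 : mstar (e.*2 - 2 * p) vy0 = (e.*2 - 2 * p)%N.
  by rewrite /mstar; mnm_simpl2; rewrite ?mul1n ?mul0n ?add0n ?muln1 ?muln0 ?addn0.
rewrite phi_coefG // m0 m2 subnK // eqxx /=.
set ff := fun j : 'I_(2 * p).+1 => \prod_(i < 4) ((Mj (2 * p) j + mstar (e.*2 - 2 * p))%MM i)^_((Mj (2 * p) j) i).
rewrite (eq_bigr (fun j : 'I_(2 * p).+1 => (if odd j then 0%N else
   ('C(2 * p, j) * ('C(e, j./2) * 'C(e, (2 * p - j)./2)) * ff j)%N)%:R)); last first.
  move=> j _; have hj := ltn_ord j.
  rewrite oddB // oddM /= -signr_odd.
  case: (odd j) => /=; first by rewrite mul0r mul0rn mulr0.
  by rewrite expr0 /ff -/(nat_of_ord j) !natrM [RHS]mulr_natr mulrnAr.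
rewrite -natr_sum; apply: natr_neq0.
rewrite big_ord_recl /=.
have h2p : ((2 * p)%N ./2 = p)%N by rewrite mul2n doubleK.
apply: ltn_addr; rewrite !muln_gt0 bin0 !bin_gt0 /= subn0 h2p hp /=.
exact: ff_gt0.
Qed.

Definition wR (i : 'I_4) : R := if (i == vx0) || (i == vy0) then 1 else 0.

Lemma sum_supp e p (G : {mpoly K[4]}) :
  G = iter (2 * p) (@Omega R K) (in_x (genericQ R ^+ e) * in_y (genericQ R ^+ e)) ->
  (p <= e)%N ->
  \sum_(m <- msupp G) meval (@vv R) (G@_m) * \prod_(i < 4) wR i ^+ m i
  = meval (@vv R) (G@_(mstar (e.*2 - 2 * p))).
Proof.
move=> hG hp.
set ms := mstar (e.*2 - 2 * p).
have hk : (2 * p <= e.*2)%N by lia.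
have ms1 : ms vx1 = 0%N by rewrite /ms /mstar; mnm_simpl2.
have ms3 : ms vy1 = 0%N by rewrite /ms /mstar; mnm_simpl2.
have ms0 : ms vx0 = (e.*2 - 2 * p)%N.
  by rewrite /ms /mstar; mnm_simpl2; rewrite ?mul1n ?mul0n ?add0n ?muln1 ?muln0 ?addn0.
have ms2 : ms vy0 = (e.*2 - 2 * p)%N.
  by rewrite /ms /mstar; mnm_simpl2; rewrite ?mul1n ?mul0n ?add0n ?muln1 ?muln0 ?addn0.
have wx0 : wR vx0 = 1 by rewrite /wR eqxx.
have wy0 : wR vy0 = 1 by rewrite /wR eqxx orbT.
have wx1 : wR vx1 = 0 by rewrite /wR vx0E vx1E vy0E.
have wy1 : wR vy1 = 0 by rewrite /wR vx0E vy1E vy0E.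
have term m : meval (@vv R) (G@_m) * \prod_(i < 4) wR i ^+ m i
    = if m == ms then meval (@vv R) (G@_ms) else 0.
  case: (posnP (m vx1)) => [hx1|hx1]; last first.
    rewrite (bigD1 vx1) //= wx1 expr0n (gtn_eqF hx1) mul0r mulr0.
    by case: eqP => // hm; move: hx1; rewrite hm ms1.
  case: (posnP (m vy1)) => [hy1|hy1]; last first.
    rewrite (bigD1 vy1) //= wy1 expr0n (gtn_eqF hy1) mul0r mulr0.
    by case: eqP => // hm; move: hy1; rewrite hm ms3.
  rewrite big1 ?mulr1; last first.
    apply: ord4_cases; by rewrite ?wx0 ?wy0 ?expr1n ?hx1 ?hy1 ?expr0.
  case: eqP => [->//|hne].
  rewrite hG phi_coefG_other //.
  rewrite -negb_and; apply/negP => /andP [/eqP a /eqP b]; apply: hne.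
  apply/mnmP; apply: ord4_cases; rewrite ?ms0 ?ms1 ?ms2 ?ms3 ?hx1 ?hy1 //; lia.
under eq_bigr => m _ do rewrite term.
case: (boolP (ms \in msupp G)) => hin.
  rewrite (bigD1_seq ms) ?msupp_uniq //= eqxx big1 ?addr0 //.
  by move=> m /negbTE ->.
rewrite big1_seq; last by move=> m /andP [_ hm]; case: eqP => // hm'; move: hin; rewrite -hm' hm.
by rewrite memN_msupp_eq0 // rmorph0.
Qed.

End Main.


End Helpers.
Import Helpers.
Import GRing.Theory.

Theorem mainTheorem8 (R : fieldType) (charR0 : [pchar R] =i pred0)
  (e : nat) (he : (1 <= e)%N) (p : nat) (hp : (p <= e)%N) :
  transvectant (2 * e) (2 * e) (genericQ R ^+ e) (genericQ R ^+ e) (2 * p)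
    != 0.
Proof.
rewrite /transvectant.
set G := iter (2 * p) _ _.
set r := (_ / _ : R).
have hr : r != 0.
  rewrite /r mulf_neq0 // ?invr_eq0 natr_neq0 // muln_gt0 fact_gt0 //.
pose vK (i : 'I_2) : {mpoly R[3]} := if i == i0 then 1 else 0.
apply/negP => /eqP H0.
have H1 : meval (@vv R) (((r%:A : {mpoly R[3]}) *: diag_xy G).@[vK]) = 0.
  by rewrite H0 meval0 rmorph0.
move: H1; rewrite mevalZ rmorphM /diag_xy comp_mpoly_meval mevalE.

rewrite rmorph_sum /=.
have hw (m : 'X_{1..4}) : meval (@vv R) (\prod_i
   (tnth [tuple 'X_(inord 0); 'X_(inord 1); 'X_(inord 0); 'X_(inord 1)] i).@[vK] ^+ m i)
   = \prod_(i < 4) wR R i ^+ m i.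
  rewrite rmorph_prod; apply: eq_bigr => i _; rewrite rmorphXn; congr (_ ^+ _).
  have h0 : (inord 0 : 'I_2) = i0 by apply: val_inj; rewrite /= inordK.
  have h1 : (inord 1 : 'I_2) = i1 by apply: val_inj; rewrite /= inordK.
  move: i; apply: ord4_cases; rewrite /wR ?vx0E ?vx1E ?vy0E ?vy1E /= mevalXU /vK ?h0 ?h1 /=;
    by rewrite ?rmorph1 ?rmorph0.
set tq := [tuple _; _; _; _].
have -> : \sum_(m <- msupp G) meval (@vv R) (G@_m * \prod_i (tnth tq i).@[vK] ^+ m i)
   = \sum_(m <- msupp G) meval (@vv R) (G@_m) * \prod_(i < 4) wR R i ^+ m i.
  by apply: eq_bigr => m _; rewrite rmorphM; congr (_ * _); exact: hw.
rewrite (@sum_supp R e p G) // => /eqP.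
rewrite mulf_eq0 (negbTE (phi_coefG_star charR0 hp)) orbF.
by rewrite mevalZ meval1 mulr1 (negbTE hr).
Qed.
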